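(* Let $A\in\mathcal R$ and $F\in\mathcal S(A)$. Then (1) if $x\notin\mathcal A(A)$ then $I_F(x)>0$; (2) if $x\notin\mathcal A(A)$ and $T(x)\in\mathcal A(A)$ then $R_F(x)>0$.
   Context: $\Sigma=\{1,\dots,d\}^{\mathbb N}$, $T$ the left shift, metric $d(\omega,\nu)=\lambda^N$, $N=\min\{k:\omega_k\ne\nu_k\}$, $0<\lambda<1$. $m_A=\max\{\int A\,d\mu:\mu\ T\text{-invariant}\}$; $\mathcal M(A)$ the set of invariant probabilities attaining $m_A$. $\mathcal S(A)$ is the set of $\alpha$-Hölder calibrated sub-actions $F$, i.e. $F(x)=\max_{Ty=x}[F(y)+A(y)-m_A]$. $R_F(x)=F(Tx)-F(x)-A(x)+m_A\ge0$, $I_F(x)=\sum_{i\ge0}R_F(T^ix)$. $S_A(x,y)=\lim_{\epsilon\to0}\sup\{\sum_{i=0}^{n-1}[A(T^iz)-m_A]:n\in\mathbb N,\ T^nz=y,\ d(z,x)<\epsilon\}$; $\mathcal A(A)=\{x:S_A(x,x)=0\}$. $\mathcal R=\{A\in C^\alpha(\Sigma,\mathbb R):\mathcal M(A)=\{\mu\},\ \mathcal A(A)=\operatorname{supp}\mu\}$. *)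

(* Defs.v *)
From Stdlib Require Import Reals Lra Lia ClassicalEpsilon FunctionalExtensionality.
From Stdlib Require Fin.
Open Scope R_scope.

Definition Sigma (d : nat) : Type := nat -> Fin.t d.

Definition shift {d : nat} (w : Sigma d) : Sigma d := fun k => w (S k).

Fixpoint iterT {d : nat} (n : nat) (w : Sigma d) : Sigma d :=
  match n with O => w | S n' => iterT n' (shift w) end.

(* d(w,v) = lam^N, N = min{k : w_k <> v_k};  d(w,w) = 0 *)
Definition dist {d : nat} (lam : R) (w v : Sigma d) : R :=
  epsilon (inhabits 0) (fun r =>
    (w = v /\ r = 0) \/
    exists n : nat, (forall k, (k < n)%nat -> w k = v k) /\ w n <> v n /\ r = lam ^ n).

Definition hoelder {d : nat} (lam alpha : R) (f : Sigma d -> R) : Prop :=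
  exists C : R, forall x y : Sigma d, x <> y ->
    Rabs (f x - f y) <= C * Rpower (dist lam x y) alpha.

Definition continuous_S {d : nat} (lam : R) (f : Sigma d -> R) : Prop :=
  forall x eps, 0 < eps -> exists delta, 0 < delta /\
    forall y, dist lam x y < delta -> Rabs (f y - f x) < eps.

(* Borel probability measures on the compact space Sigma, represented (Riesz)
   as positive normalised linear functionals on C(Sigma); mu f = \int f dmu. *)
Definition prob_measure {d : nat} (lam : R) (mu : (Sigma d -> R) -> R) : Prop :=
  (forall f g, continuous_S lam f -> continuous_S lam g ->
      mu (fun x => f x + g x) = mu f + mu g) /\
  (forall c f, continuous_S lam f -> mu (fun x => c * f x) = c * mu f) /\
  (forall f, continuous_S lam f -> (forall x, 0 <= f x) -> 0 <= mu f) /\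
  mu (fun _ => 1) = 1.

Definition invariant {d : nat} (lam : R) (mu : (Sigma d -> R) -> R) : Prop :=
  forall f, continuous_S lam f -> mu (fun x => f (shift x)) = mu f.

Definition inv_prob {d : nat} (lam : R) (mu : (Sigma d -> R) -> R) : Prop :=
  prob_measure lam mu /\ invariant lam mu.

(* two functionals represent the same measure iff they agree on C(Sigma) *)
Definition same_measure {d : nat} (lam : R) (mu nu : (Sigma d -> R) -> R) : Prop :=
  forall f, continuous_S lam f -> mu f = nu f.

Definition mA {d : nat} (lam : R) (A : Sigma d -> R) : R :=
  epsilon (inhabits 0) (fun m =>
    (exists mu, inv_prob lam mu /\ mu A = m) /\
    (forall nu, inv_prob lam nu -> nu A <= m)).

Definition maximizing {d : nat} (lam : R) (A : Sigma d -> R) (mu : (Sigma d -> R) -> R) : Prop :=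
  inv_prob lam mu /\ mu A = mA lam A.

Definition ball_ind {d : nat} (lam : R) (x : Sigma d) (eps : R) : Sigma d -> R :=
  fun y => if Rlt_dec (dist lam x y) eps then 1 else 0.

Definition in_supp {d : nat} (lam : R) (mu : (Sigma d -> R) -> R) (x : Sigma d) : Prop :=
  forall eps, 0 < eps -> 0 < mu (ball_ind lam x eps).

Definition S_set {d : nat} (lam : R) (A : Sigma d -> R) (x y : Sigma d) (eps : R) (v : R) : Prop :=
  exists (k : nat) (z : Sigma d),
    iterT (S k) z = y /\ dist lam z x < eps /\
    v = sum_f_R0 (fun i => A (iterT i z) - mA lam A) k.

(* "S_A(x,y) = s": lim_{eps -> 0} sup S_set(eps) = s *)
Definition S_A_eq {d : nat} (lam : R) (A : Sigma d -> R) (x y : Sigma d) (s : R) : Prop :=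
  forall eta, 0 < eta -> exists eps0, 0 < eps0 /\
    forall eps, 0 < eps < eps0 ->
      (forall v, S_set lam A x y eps v -> v <= s + eta) /\
      (exists v, S_set lam A x y eps v /\ s - eta < v).

Definition aubry {d : nat} (lam : R) (A : Sigma d -> R) (x : Sigma d) : Prop :=
  S_A_eq lam A x x 0.

Definition in_R {d : nat} (lam alpha : R) (A : Sigma d -> R) : Prop :=
  hoelder lam alpha A /\
  exists mu, maximizing lam A mu /\
    (forall nu, maximizing lam A nu -> same_measure lam nu mu) /\
    (forall x, aubry lam A x <-> in_supp lam mu x).

Definition calibrated {d : nat} (lam alpha : R) (A F : Sigma d -> R) : Prop :=
  hoelder lam alpha F /\
  forall x : Sigma d,
    (forall y, shift y = x -> F y + A y - mA lam A <= F x) /\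
    (exists y, shift y = x /\ F y + A y - mA lam A = F x).

Definition R_F {d : nat} (lam : R) (A F : Sigma d -> R) (x : Sigma d) : R :=
  F (shift x) - F x - A x + mA lam A.

(* I_F(x) = sum_{i>=0} R_F(T^i x) in [0,+oo] (nonnegative terms);
   I_F(x) > 0 means the supremum of the partial sums is > 0 *)
Definition I_F_pos {d : nat} (lam : R) (A F : Sigma d -> R) (x : Sigma d) : Prop :=
  exists N : nat, 0 < sum_f_R0 (fun i => R_F lam A F (iterT i x)) N.

(* Main.v *)
From Stdlib Require Import ZArith.
Require Import Defs.
From Stdlib Require Import Reals Lra Lia ClassicalEpsilon FunctionalExtensionality Classical.
From Stdlib Require Fin.
Open Scope R_scope.

Definition agree {d : nat} (a b : Sigma d) (n : nat) : Prop := forall i, (i < n)%nat -> a i = b i.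

Lemma agree_mono {d} (a b : Sigma d) n m : (m <= n)%nat -> agree a b n -> agree a b m.
Proof. intros H H1 i Hi. apply H1. lia. Qed.
Lemma agree_sym {d} (a b : Sigma d) n : agree a b n -> agree b a n.
Proof. intros H i Hi. symmetry; auto. Qed.
Lemma agree_trans {d} (a b c : Sigma d) n : agree a b n -> agree b c n -> agree a c n.
Proof. intros H1 H2 i Hi. rewrite H1; auto. Qed.
Lemma agree_refl {d} (a : Sigma d) n : agree a a n.
Proof. intros i _; reflexivity. Qed.
Lemma agree_0 {d} (a b : Sigma d) : agree a b 0.
Proof. intros i Hi; lia. Qed.

Lemma iterT_app {d} n (w : Sigma d) k : iterT n w k = w (n + k)%nat.
Proof. revert w; induction n; intros w; simpl; auto. Qed.

Lemma iterT_add {d} a b (w : Sigma d) : iterT a (iterT b w) = iterT (a + b) w.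
Proof. apply functional_extensionality; intro k. rewrite !iterT_app. f_equal; lia. Qed.

Lemma iterT_S_r {d} n (w : Sigma d) : iterT (S n) w = shift (iterT n w).
Proof. apply functional_extensionality; intro k. unfold shift. rewrite !iterT_app. f_equal; lia. Qed.

Lemma agree_iterT {d} (a b : Sigma d) i n : agree a b (i + n) -> agree (iterT i a) (iterT i b) n.
Proof. intros H k Hk. rewrite !iterT_app. apply H. lia. Qed.

Lemma agree_shift {d} (a b : Sigma d) n : agree a b (S n) -> agree (shift a) (shift b) n.
Proof. intros H k Hk. unfold shift. apply H. lia. Qed.

Lemma Rabs_le_inv (a b : R) : Rabs a <= b -> - b <= a <= b.
Proof. unfold Rabs; destruct (Rcase_abs a); intros; lra. Qed.

Lemma pow_in01 (l : R) (k : nat) : 0 < l < 1 -> 0 < l ^ k <= 1.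
Proof.
  intros Hl. induction k; simpl. lra.
  split. apply Rmult_lt_0_compat; lra. nra.
Qed.

Lemma pow_le_dec (l : R) (k n : nat) : 0 < l < 1 -> (n <= k)%nat -> l ^ k <= l ^ n.
Proof.
  intros Hl H. replace k with (n + (k - n))%nat by lia. rewrite pow_add.
  pose proof (pow_in01 l (k - n) Hl). pose proof (pow_in01 l n Hl). nra.
Qed.

Lemma pow_lt_dec (l : R) (k n : nat) : 0 < l < 1 -> (n < k)%nat -> l ^ k < l ^ n.
Proof.
  intros Hl H. replace k with (S n + (k - S n))%nat by lia. rewrite pow_add.
  pose proof (pow_in01 l (k - S n) Hl). pose proof (pow_in01 l n Hl). simpl.
  set (a := l ^ n) in *. set (b := l ^ (k - S n)) in *.
  assert (l * a * b <= l * a). { rewrite <- (Rmult_1_r (l * a)) at 2. apply Rmult_le_compat_l; nra. }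
  nra.
Qed.

Lemma pow_small (q : R) (e : R) : 0 < q < 1 -> 0 < e -> exists N, forall n, (n >= N)%nat -> q ^ n < e.
Proof.
  intros Hq He. assert (Ha : Rabs q < 1) by (rewrite Rabs_pos_eq; lra).
  destruct (pow_lt_1_zero q Ha e He) as [N HN].
  exists N. intros n Hn. specialize (HN n Hn). rewrite Rabs_pos_eq in HN; auto.
  apply pow_le; lra.
Qed.

Lemma first_diff {d} (a b : Sigma d) : a <> b -> exists k, agree a b k /\ a k <> b k.
Proof.
  intros H. assert (Hex : exists i, a i <> b i).
  { apply NNPP; intro Hn. apply H. apply functional_extensionality. intro i.
    apply NNPP; intro Hi. apply Hn; eauto. }
  destruct Hex as [i Hi].
  revert Hi. induction i as [i IH] using (well_founded_induction Wf_nat.lt_wf). intros Hi.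
  destruct (classic (agree a b i)) as [Ha | Ha].
  - exists i; auto.
  - apply NNPP; intro Hn. apply Ha. intros j Hj. apply NNPP; intro Hj'.
    apply Hn. apply (IH j Hj Hj').
Qed.

Lemma dist_cases {d} (lam : R) (a b : Sigma d) :
  (a = b /\ Defs.dist lam a b = 0) \/
  (exists k, agree a b k /\ a k <> b k /\ Defs.dist lam a b = lam ^ k).
Proof.
  unfold Defs.dist.
  match goal with |- context [epsilon ?i ?P] => assert (HP : P (epsilon i P)) end.
  { apply epsilon_spec. destruct (classic (a = b)) as [E|E].
    - exists 0; left; auto.
    - destruct (first_diff a b E) as [k [H1 H2]]. exists (lam ^ k). right. exists k; auto. }
  destruct HP as [[E1 E2] | [n [H1 [H2 H3]]]].
  - left; auto.
  - right. exists n; auto.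
Qed.

Section DistL.
Context {d : nat} (lam : R) (Hlam : 0 < lam < 1).

Lemma agree_diff_ge (a b : Sigma d) n k : agree a b n -> a k <> b k -> (n <= k)%nat.
Proof. intros H1 H2. destruct (Nat.lt_ge_cases k n); auto. exfalso; apply H2, H1; auto. Qed.

Lemma dist_nonneg (a b : Sigma d) : 0 <= Defs.dist lam a b.
Proof. destruct (dist_cases lam a b) as [[_ E]|[k [_ [_ E]]]]; rewrite E. lra. apply pow_le; lra. Qed.

Lemma dist_agree_le (a b : Sigma d) n : agree a b n -> Defs.dist lam a b <= lam ^ n.
Proof.
  intros H. destruct (dist_cases lam a b) as [[_ E]|[k [_ [Hk E]]]]; rewrite E.
  - pose proof (pow_in01 lam n Hlam); lra.
  - apply pow_le_dec; auto. eapply agree_diff_ge; eauto.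
Qed.

Lemma dist_lt_agree (a b : Sigma d) n : Defs.dist lam a b < lam ^ n -> agree a b (S n).
Proof.
  intros H. destruct (dist_cases lam a b) as [[E _]|[k [Ha [Hk E]]]].
  - subst; apply agree_refl.
  - rewrite E in H. apply agree_mono with k; auto.
    destruct (Nat.lt_ge_cases n k); try lia.
    pose proof (pow_le_dec lam n k Hlam H0). lra.
Qed.

Lemma agree_dist_lt (a b : Sigma d) n : agree a b (S n) -> Defs.dist lam a b < lam ^ n.
Proof.
  intros H. pose proof (dist_agree_le a b (S n) H). pose proof (pow_lt_dec lam (S n) n Hlam (Nat.lt_succ_diag_r n)). lra.
Qed.

Lemma dist_neq_agree (a b : Sigma d) n : a <> b -> agree a b n ->
  exists k, (n <= k)%nat /\ Defs.dist lam a b = lam ^ k.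
Proof.
  intros Hne H. destruct (dist_cases lam a b) as [[E _]|[k [Ha [Hk E]]]].
  - contradiction.
  - exists k; split; auto. eapply agree_diff_ge; eauto.
Qed.

End DistL.

Section Hold.
Context {d : nat} (lam alpha : R) (Hlam : 0 < lam < 1) (Halpha : 0 < alpha).

Definition qq := Rpower lam alpha.

Lemma qq_in : 0 < qq < 1.
Proof.
  unfold qq. split. unfold Rpower. apply exp_pos.
  replace 1 with (Rpower 1 alpha). apply Rlt_Rpower_l; lra.
  unfold Rpower. rewrite ln_1, Rmult_0_r, exp_0. reflexivity.
Qed.

Lemma Rpower_lam_pow k : Rpower (lam ^ k) alpha = qq ^ k.
Proof.
  rewrite <- Rpower_pow by lra. rewrite Rpower_mult. unfold qq.
  rewrite <- Rpower_pow by (unfold Rpower; apply exp_pos). rewrite Rpower_mult.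
  f_equal; ring.
Qed.

Lemma hoelder_agree (f : Sigma d -> R) : hoelder lam alpha f ->
  exists K, 0 <= K /\ forall a b n, agree a b n -> Rabs (f a - f b) <= K * qq ^ n.
Proof.
  intros [C HC]. exists (Rabs C). split. apply Rabs_pos.
  intros a b n H. destruct (classic (a = b)) as [E|E].
  - subst. rewrite Rminus_diag, Rabs_R0. apply Rmult_le_pos. apply Rabs_pos. apply pow_le.
    pose proof qq_in; lra.
  - destruct (dist_neq_agree lam a b n E H) as [k [Hk Hd]].
    specialize (HC a b E). rewrite Hd, Rpower_lam_pow in HC.
    pose proof (pow_le_dec qq k n qq_in Hk). pose proof (pow_in01 qq k qq_in).
    assert (C * qq ^ k <= Rabs C * qq ^ k). { apply Rmult_le_compat_r. lra. apply Rle_abs. }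
    assert (Rabs C * qq ^ k <= Rabs C * qq ^ n). { apply Rmult_le_compat_l. apply Rabs_pos. lra. }
    lra.
Qed.

End Hold.

Lemma fin_uniform_bound (d : nat) (Q : Fin.t d -> nat -> Prop) :
  (forall a K K', (K <= K')%nat -> Q a K -> Q a K') ->
  (forall a, exists K, Q a K) -> exists K, forall a, Q a K.
Proof.
  revert Q. induction d as [|d IH]; intros Q Hmono Hex.
  - exists 0%nat. intros a. apply (Fin.case0 (fun a => Q a 0%nat) a).
  - destruct (IH (fun a K => Q (Fin.FS a) K)) as [K1 HK1].
    + intros a K K' H1 H2. eapply Hmono; eauto.
    + intros a. apply Hex.
    + destruct (Hex Fin.F1) as [K0 HK0].
      exists (Nat.max K0 K1). intros a.
      apply (Fin.caseS' a (fun a => Q a (Nat.max K0 K1))).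
      * eapply Hmono; [|exact HK0]. lia.
      * intros p. eapply Hmono; [|exact (HK1 p)]. lia.
Qed.

Definition inf_often (P : nat -> Prop) : Prop := forall K, exists k, (K <= k)%nat /\ P k.

Lemma pigeon {d} (P : nat -> Prop) (f : nat -> Fin.t d) :
  inf_often P -> exists a, inf_often (fun k => P k /\ f k = a).
Proof.
  intros HP. apply NNPP; intros Hn.
  assert (H : forall a, exists K, forall k, (K <= k)%nat -> ~ (P k /\ f k = a)).
  { intros a. apply NNPP; intros Ha. apply Hn. exists a. intros K.
    apply NNPP; intros HK. apply Ha. exists K. intros k Hk Hk2. apply HK. exists k; auto. }
  destruct (fin_uniform_bound d (fun a K => forall k, (K <= k)%nat -> ~ (P k /\ f k = a))) as [K HK].
  - intros a K K' H1 H2 k Hk. apply H2. lia.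
  - exact H.
  - destruct (HP K) as [k [Hk Pk]]. apply (HK (f k) k Hk). auto.
Qed.

Definition IO {d} (s : nat -> Sigma d) (w : Sigma d) (n : nat) : Prop :=
  inf_often (fun k => agree (s k) w n).

Lemma IO_step {d} (s : nat -> Sigma d) w n : IO s w n ->
  exists w', agree w' w n /\ IO s w' (S n).
Proof.
  intros H. destruct (pigeon _ (fun k => s k n) H) as [a Ha].
  exists (fun i => if Nat.eqb i n then a else w i). split.
  - intros i Hi. destruct (Nat.eqb_spec i n); try lia. auto.
  - intros K. destruct (Ha K) as [k [Hk [H1 H2]]]. exists k; split; auto.
    intros i Hi. destruct (Nat.eqb_spec i n).
    + subst. auto.
    + apply H1. lia.
Qed.

Lemma cluster {d} (s : nat -> Sigma d) : exists y, forall n, IO s y n.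
Proof.
  set (step := fun (w : Sigma d) (n : nat) =>
     epsilon (inhabits w) (fun w' => IO s w n -> agree w' w n /\ IO s w' (S n))).
  assert (Hstep : forall w n, IO s w n -> agree (step w n) w n /\ IO s (step w n) (S n)).
  { intros w n. unfold step. apply epsilon_spec.
    destruct (classic (IO s w n)) as [H|H].
    - destruct (IO_step s w n H) as [w' Hw']. exists w'; auto.
    - exists w. intro; contradiction. }
  set (g := fix g (n : nat) : Sigma d := match n with O => s O | S m => step (g m) m end).
  assert (Hg : forall n, IO s (g n) n).
  { induction n. - intros K. exists K; split; auto. apply agree_0.
    - simpl. apply Hstep; auto. }
  assert (Hg2 : forall n, agree (g (S n)) (g n) n).
  { intros n. simpl. apply Hstep; auto. }
  assert (Hg3 : forall j n, agree (g (j + n)%nat) (g n) n).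
  { induction j; intros n. simpl. apply agree_refl.
    replace (S j + n)%nat with (S (j + n)) by lia.
    eapply agree_trans. apply agree_mono with (j + n)%nat. lia. apply Hg2. apply IHj. }
  exists (fun i => g (S i) i). intros n.
  assert (Ha : agree (fun i => g (S i) i) (g n) n).
  { intros i Hi. specialize (Hg3 (n - S i)%nat (S i)).
    replace (n - S i + S i)%nat with n in Hg3 by lia. symmetry. apply Hg3. lia. }
  intros K. destruct (Hg n K) as [k [Hk Hk2]]. exists k; split; auto.
  eapply agree_trans; [exact Hk2|]. apply agree_sym; auto.
Qed.

Set Default Proof Using "All".
Section Cont.
Context {d : nat} (lam : R) (Hlam : 0 < lam < 1).
Implicit Types f g : Sigma d -> R.

Definition dep (f : Sigma d -> R) (L : nat) : Prop := forall a b, agree a b L -> f a = f b.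

Lemma cont_bound (f : Sigma d -> R) (q K : R) : 0 < q < 1 -> 0 <= K ->
  (forall a b n, agree a b n -> Rabs (f a - f b) <= K * q ^ n) -> continuous_S lam f.
Proof.
  intros Hq HK H x eps He.
  destruct (pow_small q (eps / (K + 1)) Hq) as [N HN]. apply Rdiv_lt_0_compat; lra.
  exists (lam ^ N). split. apply pow_lt; lra.
  intros y Hy. apply (dist_lt_agree lam Hlam) in Hy.
  specialize (H y x (S N) (agree_sym _ _ _ Hy)).
  specialize (HN N (le_n _)).
  pose proof (pow_le_dec q (S N) N Hq (Nat.le_succ_diag_r N)).
  pose proof (pow_in01 q (S N) Hq).
  assert (K * q ^ S N <= K * q ^ N) by (apply Rmult_le_compat_l; lra).
  assert (K * q ^ N < eps).
  { apply Rmult_lt_compat_l with (r := K + 1) in HN; [|lra].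
    replace ((K + 1) * (eps / (K + 1))) with eps in HN by (field; lra).
    pose proof (pow_in01 q N Hq). nra. }
  lra.
Qed.

Lemma cont_dep (f : Sigma d -> R) L : dep f L -> continuous_S lam f.
Proof.
  intros H x eps He. exists (lam ^ L). split. apply pow_lt; lra.
  intros y Hy. apply (dist_lt_agree lam Hlam) in Hy. rewrite (H x y).
  rewrite Rminus_diag, Rabs_R0; lra. apply agree_mono with (S L); auto.
Qed.

Lemma cont_plus f g : continuous_S lam f -> continuous_S lam g -> continuous_S lam (fun x => f x + g x).
Proof.
  intros Hf Hg x eps He.
  destruct (Hf x (eps/2)) as [d1 [Hd1 H1]]. lra.
  destruct (Hg x (eps/2)) as [d2 [Hd2 H2]]. lra.
  exists (Rmin d1 d2). split. apply Rmin_pos; auto.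
  intros y Hy. specialize (H1 y (Rlt_le_trans _ _ _ Hy (Rmin_l _ _))).
  specialize (H2 y (Rlt_le_trans _ _ _ Hy (Rmin_r _ _))).
  replace (f y + g y - (f x + g x)) with ((f y - f x) + (g y - g x)) by ring.
  eapply Rle_lt_trans. apply Rabs_triang. lra.
Qed.

Lemma cont_scal c f : continuous_S lam f -> continuous_S lam (fun x => c * f x).
Proof.
  intros Hf x eps He.
  destruct (Hf x (eps / (Rabs c + 1))) as [d1 [Hd1 H1]]. apply Rdiv_lt_0_compat; auto.
  pose proof (Rabs_pos c); lra.
  exists d1; split; auto. intros y Hy. specialize (H1 y Hy).
  replace (c * f y - c * f x) with (c * (f y - f x)) by ring. rewrite Rabs_mult.
  pose proof (Rabs_pos c). pose proof (Rabs_pos (f y - f x)).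
  apply Rmult_lt_compat_l with (r := Rabs c + 1) in H1; [|lra].
  replace ((Rabs c + 1) * (eps / (Rabs c + 1))) with eps in H1 by (field; lra). nra.
Qed.

Lemma cont_const c : continuous_S lam (fun _ : Sigma d => c).
Proof. apply (cont_dep _ 0). intros a b _. reflexivity. Qed.

Lemma cont_minus f g : continuous_S lam f -> continuous_S lam g -> continuous_S lam (fun x => f x - g x).
Proof.
  intros Hf Hg. assert (E : (fun x => f x - g x) = (fun x => f x + (-1) * g x)).
  { apply functional_extensionality; intro; ring. }
  rewrite E. apply cont_plus; auto. apply cont_scal; auto.
Qed.

Lemma cont_mult_dep f g L : continuous_S lam f -> dep g L -> continuous_S lam (fun x => f x * g x).
Proof.
  intros Hf Hg x eps He.
  destruct (Hf x (eps / (Rabs (g x) + 1))) as [d1 [Hd1 H1]]. apply Rdiv_lt_0_compat; auto.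
  pose proof (Rabs_pos (g x)); lra.
  exists (Rmin d1 (lam ^ L)). split. apply Rmin_pos; auto. apply pow_lt; lra.
  intros y Hy. specialize (H1 y (Rlt_le_trans _ _ _ Hy (Rmin_l _ _))).
  assert (Ha : agree x y L). { apply agree_mono with (S L); auto. apply (dist_lt_agree lam Hlam); auto.
    eapply Rlt_le_trans; [exact Hy| apply Rmin_r]. }
  rewrite <- (Hg x y Ha).
  replace (f y * g x - f x * g x) with (g x * (f y - f x)) by ring. rewrite Rabs_mult.
  pose proof (Rabs_pos (g x)). pose proof (Rabs_pos (f y - f x)).
  apply Rmult_lt_compat_l with (r := Rabs (g x) + 1) in H1; [|lra].
  replace ((Rabs (g x) + 1) * (eps / (Rabs (g x) + 1))) with eps in H1 by (field; lra). nra.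
Qed.

Lemma cont_shift f : continuous_S lam f -> continuous_S lam (fun x => f (shift x)).
Proof.
  intros Hf x eps He. destruct (Hf (shift x) eps He) as [d1 [Hd1 H1]].
  destruct (pow_small lam d1 Hlam Hd1) as [N HN].
  exists (lam ^ S N). split. apply pow_lt; lra.
  intros y Hy. apply H1. apply (dist_lt_agree lam Hlam) in Hy.
  apply agree_shift in Hy.
  pose proof (dist_agree_le lam Hlam _ _ _ Hy). specialize (HN N (le_n _)).
  pose proof (pow_le_dec lam (S N) N Hlam (Nat.le_succ_diag_r N)).
  lra.
Qed.

Lemma cont_iterT f n : continuous_S lam f -> continuous_S lam (fun x => f (iterT n x)).
Proof.
  revert f; induction n; intros f Hf; simpl; auto.
  apply (cont_shift (fun x => f (iterT n x))). auto.
Qed.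

Lemma cont_bounded f : continuous_S lam f -> exists K, forall x, Rabs (f x) <= K.
Proof.
  intros Hf. apply NNPP; intros Hn.
  assert (H : forall k : nat, exists x, INR k < Rabs (f x)).
  { intros k. apply NNPP; intros Hk. apply Hn. exists (INR k). intros x.
    apply Rnot_lt_le. intro. apply Hk; eauto. }
  set (s := fun k => proj1_sig (constructive_indefinite_description _ (H k))).
  assert (Hs : forall k, INR k < Rabs (f (s k))).
  { intros k. unfold s. destruct (constructive_indefinite_description _ (H k)); auto. }
  destruct (cluster s) as [y Hy].
  destruct (Hf y 1) as [dl [Hdl Hc]]. lra.
  destruct (pow_small lam dl Hlam Hdl) as [N HN].
  destruct (archimed (Rabs (f y) + 1)) as [Hz _].
  destruct (Hy (S N) (Z.to_nat (up (Rabs (f y) + 1)))) as [k [Hk Hag]].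
  assert (Hd : Defs.dist lam y (s k) < dl).
  { apply agree_sym in Hag. pose proof (agree_dist_lt lam Hlam _ _ _ Hag). specialize (HN N (le_n _)). lra. }
  specialize (Hc _ Hd). specialize (Hs k).
  assert (INR (Z.to_nat (up (Rabs (f y) + 1))) <= INR k) by (apply le_INR; auto).
  assert (Rabs (f y) + 1 <= INR (Z.to_nat (up (Rabs (f y) + 1)))).
  { rewrite INR_IZR_INZ. rewrite Z2Nat.id. lra.
    apply le_IZR. pose proof (Rabs_pos (f y)). lra. }
  pose proof (Rabs_triang_inv (f (s k)) (f y)). lra.
Qed.

End Cont.
Unset Default Proof Using.


Fixpoint cost {d} (r : Sigma d -> R) (z : Sigma d) (L : nat) : R :=
  match L with O => 0 | S L' => r z + cost r (shift z) L' end.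

Definition concat {d} (p : Sigma d) (L : nat) (w : Sigma d) : Sigma d :=
  fun i => if Nat.ltb i L then p i else w (i - L)%nat.

Lemma concat_end {d} (p : Sigma d) L w : iterT L (concat p L w) = w.
Proof.
  apply functional_extensionality; intro k. rewrite iterT_app. unfold concat.
  destruct (Nat.ltb_spec (L + k) L). lia. f_equal; lia.
Qed.

Lemma concat_agree {d} (p : Sigma d) L w M : agree (iterT L p) w M -> agree (concat p L w) p (L + M).
Proof.
  intros H i Hi. unfold concat. destruct (Nat.ltb_spec i L). auto.
  rewrite <- H by lia. rewrite iterT_app. f_equal; lia.
Qed.

Section Cost.
Context {d : nat} (r : Sigma d -> R) (Hr : forall x, 0 <= r x).

Lemma cost_nonneg z L : 0 <= cost r z L.
Proof. revert z; induction L; intros z; simpl. lra. specialize (IHL (shift z)). specialize (Hr z). lra. Qed.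

Lemma cost_split z L1 L2 : cost r z (L1 + L2) = cost r z L1 + cost r (iterT L1 z) L2.
Proof. revert z; induction L1; intros z; simpl. ring. rewrite IHL1. ring. Qed.

Lemma cost_S_r z L : cost r z (S L) = cost r z L + r (iterT L z).
Proof. replace (S L) with (L + 1)%nat by lia. rewrite cost_split. simpl. ring. Qed.

Lemma cost_mono z L1 L2 : (L1 <= L2)%nat -> cost r z L1 <= cost r z L2.
Proof.
  intros H. replace L2 with (L1 + (L2 - L1))%nat by lia. rewrite cost_split.
  pose proof (cost_nonneg (iterT L1 z) (L2 - L1)). lra.
Qed.

Lemma term_le_cost z L i : (i < L)%nat -> r (iterT i z) <= cost r z L.
Proof.
  intros H. apply Rle_trans with (cost r z (S i)). rewrite cost_S_r.
  pose proof (cost_nonneg z i). lra. apply cost_mono. lia.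
Qed.

Lemma cost_compare (q K : R) : 0 < q < 1 -> 0 <= K ->
  (forall a b n, agree a b n -> Rabs (r a - r b) <= K * q ^ n) ->
  forall L z p M, agree z p (L + M) -> cost r z L <= cost r p L + K * q ^ M / (1 - q).
Proof.
  intros Hq HK Hb.
  assert (Hs : forall L z p M, agree z p (L + M) ->
     cost r z L <= cost r p L + K * q ^ M * (q * (1 - q ^ L) / (1 - q))).
  { induction L; intros z p M H; simpl.
    - replace (1 - 1) with 0 by ring. unfold Rdiv. rewrite Rmult_0_r, Rmult_0_l, Rmult_0_r. lra.
    - specialize (IHL (shift z) (shift p) M (agree_shift _ _ _ H)).
      specialize (Hb z p _ H). pose proof (Rle_abs (r z - r p)) as Hb0. apply (Rle_trans _ _ _ Hb0) in Hb.
      rewrite pow_add in Hb. simpl in Hb |- *.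
      assert (E : K * q ^ M * (q * (1 - q * q ^ L) / (1 - q)) =
                  K * (q * q ^ L * q ^ M) + K * q ^ M * (q * (1 - q ^ L) / (1 - q))) by (field; lra).
      rewrite E.
      lra. }
  intros L z p M H. specialize (Hs L z p M H).
  assert (K * q ^ M * (q * (1 - q ^ L) / (1 - q)) <= K * q ^ M / (1 - q)).
  { pose proof (pow_in01 q L Hq). pose proof (pow_in01 q M Hq).
    assert (X : q * (1 - q ^ L) / (1 - q) <= 1 / (1 - q)).
    { unfold Rdiv. apply Rmult_le_compat_r. apply Rlt_le, Rinv_0_lt_compat; lra. nra. }
    assert (0 <= K * q ^ M) by (apply Rmult_le_pos; lra).
    replace (K * q ^ M / (1 - q)) with (K * q ^ M * (1 / (1 - q))) by (field; lra).
    apply Rmult_le_compat_l; auto. }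
  lra.
Qed.

End Cost.


Lemma Kpow_small (q K e : R) : 0 < q < 1 -> 0 <= K -> 0 < e -> exists N, forall n, (n >= N)%nat -> K * q ^ n < e.
Proof.
  intros Hq HK He. destruct (pow_small q (e / (K + 1)) Hq) as [N HN].
  apply Rdiv_lt_0_compat; lra.
  exists N. intros n Hn. specialize (HN n Hn). pose proof (pow_in01 q n Hq).
  apply Rmult_lt_compat_l with (r := K + 1) in HN; [|lra].
  replace ((K + 1) * (e / (K + 1))) with e in HN by (field; lra). nra.
Qed.

Section Sys.
Context {d : nat} (lam alpha : R) (Hlam : 0 < lam < 1) (Halpha : 0 < alpha)
  (A F : Sigma d -> R) (HAh : hoelder lam alpha A) (HF : calibrated lam alpha A F).

Let m := mA lam A.
Let RR := R_F lam A F.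
Let q := qq lam alpha.
Let Hq : 0 < q < 1 := qq_in lam alpha Hlam Halpha.

Lemma RR_nonneg x : 0 <= RR x.
Proof.
  destruct HF as [_ Hc]. destruct (Hc (shift x)) as [H _]. specialize (H x eq_refl).
  unfold RR, R_F. fold m in H |- *. lra.
Qed.

Lemma F_hold : exists K, 0 <= K /\ forall a b n, agree a b n -> Rabs (F a - F b) <= K * q ^ n.
Proof. apply hoelder_agree; auto. destruct HF; auto. Qed.

Lemma A_hold : exists K, 0 <= K /\ forall a b n, agree a b n -> Rabs (A a - A b) <= K * q ^ n.
Proof. apply hoelder_agree; auto. Qed.

Lemma R_hold : exists K, 0 <= K /\ forall a b n, agree a b n -> Rabs (RR a - RR b) <= K * q ^ n.
Proof.
  destruct F_hold as [KF [HKF HF1]]. destruct A_hold as [KA [HKA HA1]].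
  exists (KF / q + KF + KA). split.
  { assert (0 <= KF / q) by (unfold Rdiv; apply Rmult_le_pos; [lra| apply Rlt_le, Rinv_0_lt_compat; lra]). lra. }
  intros a b n H.
  assert (H1 : Rabs (F (shift a) - F (shift b)) <= KF / q * q ^ n).
  { destruct n as [|n].
    - specialize (HF1 (shift a) (shift b) 0%nat (agree_0 _ _)). simpl in *.
      assert (KF * 1 <= KF / q * 1). { apply Rmult_le_compat_r. lra.
        unfold Rdiv. rewrite <- (Rmult_1_r KF) at 1. apply Rmult_le_compat_l; auto.
        rewrite <- Rinv_1. apply Rinv_le_contravar; lra. }
      lra.
    - specialize (HF1 (shift a) (shift b) n (agree_shift _ _ _ H)).
      replace (KF / q * q ^ S n) with (KF * q ^ n) by (simpl; field; lra). auto. }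
  specialize (HF1 a b n H). specialize (HA1 a b n H).
  unfold RR, R_F.
  replace (F (shift a) - F a - A a + mA lam A - (F (shift b) - F b - A b + mA lam A))
    with ((F (shift a) - F (shift b)) - (F a - F b) - (A a - A b)) by ring.
  eapply Rle_trans. apply Rabs_triang. rewrite Rabs_Ropp.
  eapply Rle_trans. apply Rplus_le_compat_r. eapply Rle_trans. apply Rabs_triang.
  rewrite Rabs_Ropp. apply Rle_refl.
  lra.
Qed.

Lemma sum_identity z k :
  sum_f_R0 (fun i => A (iterT i z) - m) k = F (iterT (S k) z) - F z - cost RR z (S k).
Proof.
  induction k.
  - simpl. unfold RR, R_F. fold m. ring.
  - simpl sum_f_R0. rewrite IHk. rewrite (cost_S_r RR z (S k)).
    assert (E : RR (iterT (S k) z) = F (shift (iterT (S k) z)) - F (iterT (S k) z) - A (iterT (S k) z) + m) by reflexivity.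
    rewrite E. rewrite (iterT_S_r (S k) z).
    change (iterT k (shift z)) with (iterT (S k) z). ring.
Qed.

Definition reach (a b : Sigma d) (M : nat) (dl : R) : Prop :=
  exists p L, (1 <= L)%nat /\ agree p a M /\ agree (iterT L p) b M /\ cost RR p L <= dl.

Lemma reach_mono a b M M' dl dl' : (M <= M')%nat -> dl' <= dl -> reach a b M' dl' -> reach a b M dl.
Proof.
  intros H1 H2 [p [L [HL [Ha [Hb Hc]]]]]. exists p, L. repeat split; auto.
  apply agree_mono with M'; auto. apply agree_mono with M'; auto. lra.
Qed.

Section KR.
Variable KR : R.
Hypothesis HKR0 : 0 <= KR.
Hypothesis HKR : forall a b n, agree a b n -> Rabs (RR a - RR b) <= KR * q ^ n.

Lemma reach_trans a b c M dl1 dl2 : reach a b M dl1 -> reach b c M dl2 ->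
  reach a c M (dl1 + dl2 + KR * q ^ M / (1 - q)).
Proof.
  intros [p1 [L1 [HL1 [Ha1 [Hb1 Hc1]]]]] [p2 [L2 [HL2 [Ha2 [Hb2 Hc2]]]]].
  assert (H1 : agree (iterT L1 p1) p2 M) by (eapply agree_trans; [exact Hb1| apply agree_sym; auto]).
  pose proof (concat_agree p1 L1 p2 M H1) as H2.
  exists (concat p1 L1 p2), (L1 + L2)%nat. repeat split.
  - lia.
  - eapply agree_trans; [|exact Ha1]. apply agree_mono with (L1 + M)%nat; auto. lia.
  - rewrite Nat.add_comm, <- iterT_add, concat_end. auto.
  - rewrite cost_split, concat_end.
    pose proof (cost_compare RR q KR Hq HKR0 HKR L1 _ _ M H2). lra.
Qed.

Lemma aubry_crit y : (forall M dl, 0 < dl -> reach y y M dl) -> aubry lam A y.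
Proof.
  intros Hr. unfold aubry, S_A_eq. intros eta Heta.
  destruct F_hold as [KF [HKF HF1]].
  destruct (Kpow_small q KF (eta / 2) Hq HKF) as [M0 HM0]. lra.
  exists (lam ^ M0). split. apply pow_lt; lra.
  intros eps [He1 He2]. split.
  - intros v [k [z [Hz [Hd Hv]]]]. subst v. fold m. rewrite sum_identity, Hz.
    assert (Hd2 : Defs.dist lam z y < lam ^ M0) by lra.
    apply (dist_lt_agree lam Hlam) in Hd2. specialize (HF1 _ _ _ Hd2).
    pose proof (cost_nonneg RR RR_nonneg z (S k)).
    pose proof (pow_le_dec q (S M0) M0 Hq (Nat.le_succ_diag_r M0)).
    specialize (HM0 M0 (le_n _)).
    assert (KF * q ^ S M0 <= KF * q ^ M0) by (apply Rmult_le_compat_l; auto).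
    pose proof (Rle_abs (F y - F z)). rewrite <- Rabs_Ropp in HF1.
    replace (- (F z - F y)) with (F y - F z) in HF1 by ring. lra.
  - destruct (pow_small lam eps Hlam He1) as [M1 HM1].
    assert (HE : exists M2, forall n, (n >= M2)%nat -> KR * q ^ n / (1 - q) < eta / 4).
    { destruct (Kpow_small q (KR / (1 - q)) (eta / 4) Hq) as [M2 HM2].
      unfold Rdiv; apply Rmult_le_pos; auto. apply Rlt_le, Rinv_0_lt_compat; lra. lra.
      exists M2. intros n Hn. specialize (HM2 n Hn). unfold Rdiv in *.
      replace (KR * q ^ n * / (1 - q)) with (KR * / (1 - q) * q ^ n) by ring. auto. }
    destruct HE as [M2 HM2].
    set (M := Nat.max M0 (Nat.max (S M1) M2)).
    destruct (Hr M (eta / 4)) as [p [L [HL [Ha [Hb Hc]]]]]. lra.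
    assert (H1 : agree (iterT L p) y M) by auto.
    pose proof (concat_agree p L y M H1) as H2.
    set (z := concat p L y).
    assert (Hzy : agree z y M).
    { eapply agree_trans; [|exact Ha]. apply agree_mono with (L + M)%nat; auto. lia. }
    exists (sum_f_R0 (fun i => A (iterT i z) - mA lam A) (L - 1)). split.
    + exists (L - 1)%nat, z. repeat split.
      * replace (S (L - 1)) with L by lia. apply concat_end.
      * assert (agree z y (S M1)) by (apply agree_mono with M; auto; unfold M; lia).
        pose proof (agree_dist_lt lam Hlam _ _ _ H). specialize (HM1 M1 (le_n _)). lra.
    + fold m. rewrite sum_identity. replace (S (L - 1)) with L by lia.
      unfold z. rewrite concat_end. fold z.
      pose proof (cost_compare RR q KR Hq HKR0 HKR L _ _ M H2). fold z in H.
      specialize (HM2 M ltac:(unfold M; lia)).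
      specialize (HF1 _ _ _ Hzy).
      specialize (HM0 M ltac:(unfold M; lia)).
      pose proof (Rle_abs (F z - F y)). rewrite Rabs_minus_sym in HF1. 
      pose proof (Rle_abs (F y - F z)).
      assert (Rabs (F z - F y) <= KF * q ^ M) by (rewrite Rabs_minus_sym; auto).
      lra.
Qed.

End KR.

End Sys.


Set Default Proof Using "All".
Section Meas.
Context {d : nat} (lam : R) (Hlam : 0 < lam < 1) (mu : (Sigma d -> R) -> R)
  (Hpm : prob_measure lam mu).
Implicit Types f g h : Sigma d -> R.

Lemma mu_add f g : continuous_S lam f -> continuous_S lam g -> mu (fun x => f x + g x) = mu f + mu g.
Proof. destruct Hpm as [H _]. apply H. Qed.
Lemma mu_scal c f : continuous_S lam f -> mu (fun x => c * f x) = c * mu f.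
Proof. destruct Hpm as [_ [H _]]. apply H. Qed.
Lemma mu_pos f : continuous_S lam f -> (forall x, 0 <= f x) -> 0 <= mu f.
Proof. destruct Hpm as [_ [_ [H _]]]. apply H. Qed.
Lemma mu_one : mu (fun _ => 1) = 1.
Proof. destruct Hpm as [_ [_ [_ H]]]. apply H. Qed.

Lemma mu_minus f g : continuous_S lam f -> continuous_S lam g -> mu (fun x => f x - g x) = mu f - mu g.
Proof.
  intros Hf Hg. assert (E : (fun x => f x - g x) = (fun x => f x + (fun y => -1 * g y) x)).
  { apply functional_extensionality; intro; ring. }
  rewrite E, mu_add; auto. rewrite mu_scal; auto. ring. apply cont_scal; auto.
Qed.

Lemma mu_const c : mu (fun _ => c) = c.
Proof.
  assert (E : (fun _ : Sigma d => c) = (fun x => c * (fun _ : Sigma d => 1) x)).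
  { apply functional_extensionality; intro; ring. }
  rewrite E, mu_scal, mu_one. ring. apply cont_const; auto.
Qed.

Lemma mu_le f g : continuous_S lam f -> continuous_S lam g -> (forall x, f x <= g x) -> mu f <= mu g.
Proof.
  intros Hf Hg H. pose proof (mu_pos (fun x => g x - f x) (cont_minus lam Hlam g f Hg Hf)).
  rewrite mu_minus in H0; auto. assert (0 <= mu g - mu f) by (apply H0; intro x; specialize (H x); lra). lra.
Qed.


Lemma mu_ext f g : (forall x, f x = g x) -> mu f = mu g.
Proof. intros H. f_equal. apply functional_extensionality; auto. Qed.

Lemma mu_extract e h dl : continuous_S lam e -> continuous_S lam h ->
  (forall w, e w = 0 \/ e w = 1) -> (forall w, 0 <= h w) -> mu h = 0 -> 0 < mu e -> 0 < dl ->
  exists u, e u = 1 /\ h u < dl.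
Proof.
  intros He Hh H01 Hh0 Hmu Hmue Hdl. apply NNPP; intro Hn.
  assert (Hle : forall w, dl * e w <= h w).
  { intros w. destruct (H01 w) as [E|E]; rewrite E.
    - rewrite Rmult_0_r; auto.
    - apply Rnot_lt_le. intro. apply Hn. exists w. split; auto. lra. }
  pose proof (mu_le (fun w => dl * e w) h (cont_scal lam Hlam dl e He) Hh Hle).
  rewrite mu_scal in H; auto. nra.
Qed.

End Meas.
Unset Default Proof Using.

Definition cyl {d} (y : Sigma d) (L : nat) : Sigma d -> R :=
  fun w => if excluded_middle_informative (agree w y L) then 1 else 0.

Lemma cyl_dep {d} (y : Sigma d) L : dep (cyl y L) L.
Proof.
  intros a b H. unfold cyl.
  destruct (excluded_middle_informative (agree a y L)) as [H1|H1];
  destruct (excluded_middle_informative (agree b y L)) as [H2|H2]; auto; exfalso.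
  - apply H2. eapply agree_trans; [apply agree_sym; exact H| exact H1].
  - apply H1. eapply agree_trans; [exact H| exact H2].
Qed.

Lemma ball_cyl {d} lam (Hlam : 0 < lam < 1) (y : Sigma d) N : ball_ind lam y (lam ^ N) = cyl y (S N).
Proof.
  apply functional_extensionality; intro w. unfold ball_ind, cyl.
  destruct (Rlt_dec (Defs.dist lam y w) (lam ^ N)) as [H|H];
  destruct (excluded_middle_informative (agree w y (S N))) as [H2|H2]; auto; exfalso.
  - apply H2, agree_sym. apply (dist_lt_agree lam Hlam); auto.
  - apply H. apply (agree_dist_lt lam Hlam). apply agree_sym; auto.
Qed.

Lemma dep_mono {d} (f : Sigma d -> R) L L' : (L <= L')%nat -> dep f L -> dep f L'.
Proof. intros H Hf a b Hab. apply Hf. apply agree_mono with L'; auto. Qed.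

Lemma dep_shift {d} (f : Sigma d -> R) L : dep f L -> dep (fun w => f (shift w)) (S L).
Proof. intros Hf a b Hab. apply Hf. apply agree_shift; auto. Qed.

Lemma dep_mult {d} (f g : Sigma d -> R) L : dep f L -> dep g L -> dep (fun w => f w * g w) L.
Proof. intros Hf Hg a b H. rewrite (Hf a b H), (Hg a b H). auto. Qed.

Lemma dep_minus {d} (f g : Sigma d -> R) L : dep f L -> dep g L -> dep (fun w => f w - g w) L.
Proof. intros Hf Hg a b H. rewrite (Hf a b H), (Hg a b H). auto. Qed.

Definition Lim (u : nat -> R) : R := epsilon (inhabits 0) (fun l => Un_cv u l).

Lemma Lim_spec u l : Un_cv u l -> Lim u = l.
Proof.
  intros H. unfold Lim. apply (UL_sequence u). apply epsilon_spec. eauto. auto.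
Qed.

Lemma Un_cv_const c : Un_cv (fun _ : nat => c) c.
Proof. intros eps He. exists 0%nat. intros n _. unfold Rdist. rewrite Rminus_diag, Rabs_R0. auto. Qed.

Section Restr.
Context {d : nat} (lam : R) (Hlam : 0 < lam < 1) (mu : (Sigma d -> R) -> R)
  (Hpm : prob_measure lam mu) (Hinv : invariant lam mu) (y' : Sigma d) (Lc : nat).
Implicit Types f g h : Sigma d -> R.

Definition Wset (N : nat) (w : Sigma d) : Prop :=
  exists n, (1 <= n <= N)%nat /\ agree (iterT n w) y' Lc.

Definition eN (N : nat) : Sigma d -> R :=
  fun w => if excluded_middle_informative (Wset N w) then 1 else 0.

Lemma eN_01 N w : eN N w = 0 \/ eN N w = 1.
Proof. unfold eN. destruct excluded_middle_informative; auto. Qed.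

Lemma eN_dep N : dep (eN N) (N + Lc).
Proof.
  assert (H : forall a b, agree a b (N + Lc) -> Wset N a -> Wset N b).
  { intros a b Hab [n [Hn Ha]]. exists n. split; auto. intros i Hi. rewrite <- Ha by auto.
    rewrite !iterT_app. symmetry. apply Hab. lia. }
  intros a b Hab. unfold eN.
  destruct (excluded_middle_informative (Wset N a)) as [H1|H1];
  destruct (excluded_middle_informative (Wset N b)) as [H2|H2]; auto; exfalso.
  - apply H2. eapply H; eauto.
  - apply H1. eapply H; eauto. apply agree_sym; auto.
Qed.

Lemma eN_cont N : continuous_S lam (eN N).
Proof. apply (cont_dep lam Hlam _ _ (eN_dep N)). Qed.

Lemma eN_le_mono N N' w : (N <= N')%nat -> eN N w <= eN N' w.
Proof.
  intros H. unfold eN.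
  destruct (excluded_middle_informative (Wset N w)) as [H1|H1];
  destruct (excluded_middle_informative (Wset N' w)) as [H2|H2]; try lra.
  exfalso. apply H2. destruct H1 as [n [Hn Ha]]. exists n. split; auto. lia.
Qed.

Lemma eN_le_shift N w : eN N (shift w) <= eN (S N) w.
Proof.
  unfold eN.
  destruct (excluded_middle_informative (Wset N (shift w))) as [H1|H1];
  destruct (excluded_middle_informative (Wset (S N) w)) as [H2|H2]; try lra.
  exfalso. apply H2. destruct H1 as [n [Hn Ha]]. exists (S n). split. lia. simpl. auto.
Qed.

Definition cN (N : nat) : R := mu (eN N).

Lemma cN_growing : Un_growing cN.
Proof. intros N. unfold cN. apply (mu_le lam Hlam mu Hpm); try apply eN_cont. intros w; apply eN_le_mono; lia. Qed.

Lemma cN_le1 N : cN N <= 1.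
Proof.
  unfold cN. rewrite <- (mu_const lam Hlam mu Hpm 1). apply (mu_le lam Hlam mu Hpm).
  apply eN_cont. apply cont_const; auto. intros w; destruct (eN_01 N w) as [E|E]; rewrite E; lra.
Qed.

Lemma cN_cv : exists c, Un_cv cN c.
Proof.
  destruct (growing_cv cN cN_growing) as [c Hc].
  exists 1. intros x [n E]. subst. apply cN_le1.
  exists c; auto.
Qed.

Lemma mu_diff_bound f K e1 e2 L : continuous_S lam f -> (forall x, Rabs (f x) <= K) ->
  dep e1 L -> dep e2 L -> (forall x, e1 x <= e2 x) ->
  Rabs (mu (fun x => f x * e2 x) - mu (fun x => f x * e1 x)) <= K * (mu e2 - mu e1).
Proof.
  intros Hf HK H1 H2 Hle.
  assert (C1 : continuous_S lam (fun x => f x * e1 x)) by (apply (cont_mult_dep lam Hlam _ _ L); auto).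
  assert (C2 : continuous_S lam (fun x => f x * e2 x)) by (apply (cont_mult_dep lam Hlam _ _ L); auto).
  assert (D1 : continuous_S lam e1) by (apply (cont_dep lam Hlam _ L); auto).
  assert (D2 : continuous_S lam e2) by (apply (cont_dep lam Hlam _ L); auto).
  assert (G : continuous_S lam (fun x => f x * e2 x - f x * e1 x)) by (apply (cont_minus lam Hlam); auto).
  assert (GK : continuous_S lam (fun x => K * e2 x - K * e1 x)).
  { apply (cont_minus lam Hlam); apply (cont_scal lam Hlam); auto. }
  assert (EK : mu (fun x => K * e2 x - K * e1 x) = K * (mu e2 - mu e1)).
  { rewrite (mu_minus lam Hlam mu Hpm); try apply (cont_scal lam Hlam); auto.
    rewrite !(mu_scal lam Hlam mu Hpm); auto. ring. }
  rewrite <- (mu_minus lam Hlam mu Hpm) by auto. rewrite <- EK.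
  apply Rabs_le. split.
  - match goal with |- - mu ?G <= _ => replace (- mu G) with (-1 * mu G) by ring end.
    rewrite <- (mu_scal lam Hlam mu Hpm) by auto.
    apply (mu_le lam Hlam mu Hpm). apply (cont_scal lam Hlam); auto. auto.
    intros x. specialize (HK x). specialize (Hle x). apply Rabs_le_inv in HK. nra.
  - apply (mu_le lam Hlam mu Hpm); auto.
    intros x. specialize (HK x). specialize (Hle x). apply Rabs_le_inv in HK. nra.
Qed.

Definition aS f (N : nat) : R := mu (fun w => f w * eN N w).

Lemma bound_abs f : continuous_S lam f -> exists K, 0 <= K /\ forall x, Rabs (f x) <= K.
Proof.
  intros Hf. destruct (cont_bounded lam Hlam f Hf) as [K HK]. exists (Rabs K). split.
  apply Rabs_pos. intros x. eapply Rle_trans. apply HK. apply Rle_abs.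
Qed.

Lemma cN_cauchy : Cauchy_crit cN.
Proof. destruct cN_cv as [c Hc]. apply (CV_Cauchy cN (exist _ c Hc)). Qed.

Lemma aS_diff f K n m : continuous_S lam f -> (forall x, Rabs (f x) <= K) -> (n <= m)%nat ->
  Rabs (aS f m - aS f n) <= K * (cN m - cN n).
Proof.
  intros Hf HK H. unfold aS, cN. apply (mu_diff_bound f K (eN n) (eN m) (m + Lc)); auto.
  apply dep_mono with (n + Lc)%nat. lia. apply eN_dep. apply eN_dep.
  intros x. apply eN_le_mono; auto.
Qed.

Lemma aS_cauchy f : continuous_S lam f -> Cauchy_crit (aS f).
Proof.
  intros Hf. destruct (bound_abs f Hf) as [K [HK0 HK]].
  intros eps He. destruct (cN_cauchy (eps / (K + 1))) as [N0 HN0].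
  apply Rdiv_lt_0_compat; lra.
  exists N0. intros n m Hn Hm. unfold Rdist. specialize (HN0 n m Hn Hm). unfold Rdist in HN0.
  assert (X : K * Rabs (cN n - cN m) < eps).
  { apply Rle_lt_trans with (K * (eps / (K + 1))).
    apply Rmult_le_compat_l; lra.
    apply Rmult_lt_reg_l with (K + 1). lra.
    replace ((K + 1) * (K * (eps / (K + 1)))) with (K * eps) by (field; lra). nra. }
  destruct (Nat.le_ge_cases n m) as [H|H].
  - pose proof (aS_diff f K n m Hf HK H). rewrite Rabs_minus_sym.
    pose proof (Rle_abs (cN m - cN n)). rewrite Rabs_minus_sym in H1.
    assert (K * (cN m - cN n) <= K * Rabs (cN n - cN m)) by (apply Rmult_le_compat_l; auto). lra.
  - pose proof (aS_diff f K m n Hf HK H).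
    pose proof (Rle_abs (cN n - cN m)).
    assert (K * (cN n - cN m) <= K * Rabs (cN n - cN m)) by (apply Rmult_le_compat_l; auto). lra.
Qed.

Definition mu1 f : R := Lim (aS f).

Lemma mu1_cv f : continuous_S lam f -> Un_cv (aS f) (mu1 f).
Proof.
  intros Hf. destruct (R_complete (aS f) (aS_cauchy f Hf)) as [l Hl].
  unfold mu1. rewrite (Lim_spec _ l Hl). auto.
Qed.

Lemma mu1_add f g : continuous_S lam f -> continuous_S lam g ->
  mu1 (fun x => f x + g x) = mu1 f + mu1 g.
Proof.
  intros Hf Hg. unfold mu1 at 1. apply Lim_spec.
  assert (E : aS (fun x => f x + g x) = (fun N => aS f N + aS g N)).
  { apply functional_extensionality; intro N. unfold aS.
    rewrite <- (mu_add lam Hlam mu Hpm).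
    apply (mu_ext lam Hlam mu Hpm). intros; ring.
    all: apply (cont_mult_dep lam Hlam _ _ (N + Lc)); auto; apply eN_dep. }
  rewrite E. apply CV_plus; apply mu1_cv; auto.
Qed.

Lemma mu1_scal c f : continuous_S lam f -> mu1 (fun x => c * f x) = c * mu1 f.
Proof.
  intros Hf. unfold mu1 at 1. apply Lim_spec.
  assert (E : aS (fun x => c * f x) = (fun N => c * aS f N)).
  { apply functional_extensionality; intro N. unfold aS.
    rewrite <- (mu_scal lam Hlam mu Hpm).
    apply (mu_ext lam Hlam mu Hpm). intros; ring.
    apply (cont_mult_dep lam Hlam _ _ (N + Lc)); auto; apply eN_dep. }
  rewrite E. apply CV_mult. apply Un_cv_const. apply mu1_cv; auto.
Qed.

Lemma mu1_pos f : continuous_S lam f -> (forall x, 0 <= f x) -> 0 <= mu1 f.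
Proof.
  intros Hf H. apply (@Rle_cv_lim (fun _ => 0) (aS f)). 2: apply Un_cv_const. 2: apply mu1_cv; auto.
  intros N. unfold aS. apply (mu_pos lam Hlam mu Hpm).
  apply (cont_mult_dep lam Hlam _ _ (N + Lc)); auto; apply eN_dep.
  intros x. specialize (H x). destruct (eN_01 N x) as [E|E]; rewrite E; lra.
Qed.

Lemma mu1_le_mu f : continuous_S lam f -> (forall x, 0 <= f x) -> mu1 f <= mu f.
Proof.
  intros Hf H. apply (@Rle_cv_lim (aS f) (fun _ => mu f)). 2: apply mu1_cv; auto. 2: apply Un_cv_const.
  intros N. unfold aS. apply (mu_le lam Hlam mu Hpm); auto.
  apply (cont_mult_dep lam Hlam _ _ (N + Lc)); auto; apply eN_dep.
  intros x. specialize (H x). destruct (eN_01 N x) as [E|E]; rewrite E; lra.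
Qed.

Lemma mu1_inv f : continuous_S lam f -> mu1 (fun x => f (shift x)) = mu1 f.
Proof.
  intros Hf. destruct (bound_abs f Hf) as [K [HK0 HK]].
  assert (Hfs : continuous_S lam (fun x => f (shift x))) by (apply (cont_shift lam Hlam); auto).
  destruct cN_cv as [c Hc].
  assert (Hstep : forall N, Rabs (aS (fun x => f (shift x)) (S N) - aS f N) <= K * (cN (S N) - cN N)).
  { intros N.
    assert (E1 : aS f N = mu (fun w => f (shift w) * eN N (shift w))).
    { unfold aS. symmetry. apply (Hinv (fun w => f w * eN N w)).
      apply (cont_mult_dep lam Hlam _ _ (N + Lc)); auto; apply eN_dep. }
    assert (E2 : cN N = mu (fun w => eN N (shift w))).
    { unfold cN. symmetry. apply Hinv. apply eN_cont. }
    rewrite E1, E2. unfold aS, cN.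
    apply (mu_diff_bound (fun x => f (shift x)) K (fun w => eN N (shift w)) (eN (S N)) (S N + Lc)); auto.
    intros x. auto.
    apply dep_shift. apply eN_dep. apply eN_dep. intros x. apply eN_le_shift. }
  pose proof (mu1_cv _ Hfs) as C1. pose proof (mu1_cv _ Hf) as C2.
  set (L1 := mu1 (fun x => f (shift x))) in *. set (L2 := mu1 f) in *.
  destruct (Req_dec L1 L2) as [E|Hne]; auto. exfalso.
  set (eps := Rabs (L1 - L2) / 4).
  assert (Heps : 0 < eps). { unfold eps. apply Rdiv_lt_0_compat; [|lra]. apply Rabs_pos_lt. lra. }
  destruct (C1 eps Heps) as [N1 HN1]. destruct (C2 eps Heps) as [N2 HN2].
  destruct (Hc (eps / (K + 1))) as [N3 HN3]. apply Rdiv_lt_0_compat; lra.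
  set (N := Nat.max N1 (Nat.max N2 N3)).
  specialize (HN1 (S N) ltac:(unfold N; lia)). specialize (HN2 N ltac:(unfold N; lia)).
  pose proof (HN3 (S N) ltac:(unfold N; lia)) as HN3a. specialize (HN3 N ltac:(unfold N; lia)).
  specialize (Hstep N). unfold Rdist in *.
  assert (X : K * (cN (S N) - cN N) <= K * (2 * (eps / (K + 1)))).
  { apply Rmult_le_compat_l; auto.
    pose proof (Rle_abs (cN (S N) - c)). pose proof (Rle_abs (- (cN N - c))).
    rewrite Rabs_Ropp in H0. lra. }
  assert (X2 : K * (2 * (eps / (K + 1))) <= 2 * eps).
  { replace (K * (2 * (eps / (K + 1)))) with (2 * eps * (K / (K + 1))) by (field; lra).
    rewrite <- (Rmult_1_r (2 * eps)) at 2. apply Rmult_le_compat_l. lra.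
    unfold Rdiv. apply Rmult_le_reg_r with (K + 1). lra. rewrite Rmult_assoc, Rinv_l; lra. }
  assert (T : Rabs (L1 - L2) <= Rabs (L1 - aS (fun x => f (shift x)) (S N))
     + Rabs (aS (fun x => f (shift x)) (S N) - aS f N) + Rabs (aS f N - L2)).
  { replace (L1 - L2) with ((L1 - aS (fun x => f (shift x)) (S N)) +
       (aS (fun x => f (shift x)) (S N) - aS f N) + (aS f N - L2)) by ring.
    eapply Rle_trans. apply Rabs_triang. apply Rplus_le_compat_r. apply Rabs_triang. }
  rewrite Rabs_minus_sym in HN1.
  unfold eps in *. lra.
Qed.

End Restr.


Definition Lin {d} (lam : R) (rho : (Sigma d -> R) -> R) : Prop :=
  (forall f g, continuous_S lam f -> continuous_S lam g -> rho (fun x => f x + g x) = rho f + rho g) /\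
  (forall c f, continuous_S lam f -> rho (fun x => c * f x) = c * rho f).

Section Trans.
Context {d : nat} (lam alpha : R) (Hlam : 0 < lam < 1) (Halpha : 0 < alpha)
  (A F : Sigma d -> R) (HAh : hoelder lam alpha A) (HF : calibrated lam alpha A F)
  (mu : (Sigma d -> R) -> R) (Hmax : maximizing lam A mu)
  (Huniq : forall nu, maximizing lam A nu -> same_measure lam nu mu).

Let m := mA lam A.
Let RR := R_F lam A F.
Let q := qq lam alpha.
Let Hq : 0 < q < 1 := qq_in lam alpha Hlam Halpha.

Lemma Hpm : prob_measure lam mu.
Proof. destruct Hmax as [[H _] _]; auto. Qed.
Lemma Hinv : invariant lam mu.
Proof. destruct Hmax as [[_ H] _]; auto. Qed.

Lemma F_cont : continuous_S lam F.
Proof. destruct (F_hold lam alpha Hlam Halpha A F HF) as [K [HK H]]. eapply cont_bound; eauto. Qed.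
Lemma A_cont : continuous_S lam A.
Proof. destruct (A_hold lam alpha Hlam Halpha A HAh) as [K [HK H]]. eapply cont_bound; eauto. Qed.
Lemma RR_cont : continuous_S lam RR.
Proof. destruct (R_hold lam alpha Hlam Halpha A F HAh HF) as [K [HK H]]. eapply cont_bound; eauto. Qed.

Lemma cost_cont N : continuous_S lam (fun w => cost RR w N).
Proof.
  induction N; simpl. apply cont_const; auto.
  apply (cont_plus lam Hlam). apply RR_cont. apply (cont_shift lam Hlam (fun w => cost RR w N)). auto.
Qed.

Lemma lin_A rho : Lin lam rho ->
  rho A = rho (fun x => F (shift x)) - rho F - rho RR + m * rho (fun _ => 1).
Proof.
  intros [Ha Hs].
  assert (E : A = fun x => (fun x => (fun x => F (shift x)) x + (fun x => -1 * F x) x) x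
                  + (fun x => (fun x => -1 * RR x) x + (fun x => m * (fun _ => 1) x) x) x).
  { apply functional_extensionality; intro x. unfold RR, R_F. fold m. ring. }
  pose proof (cont_shift lam Hlam F F_cont) as C1.
  pose proof F_cont as C2. pose proof RR_cont as C3.
  pose proof (cont_const lam Hlam 1 : continuous_S lam (fun _ : Sigma d => 1)) as C4.
  rewrite E at 1. rewrite Ha, Ha, Ha, Hs, Hs, Hs; auto.
  ring.
  all: try (apply (cont_scal lam Hlam); auto).
  all: try (apply (cont_plus lam Hlam); apply (cont_scal lam Hlam); auto).
  all: try (apply (cont_plus lam Hlam); auto; apply (cont_scal lam Hlam); auto).
Qed.

Lemma mu_lin : Lin lam mu.
Proof. split. apply (mu_add lam Hlam mu Hpm). apply (mu_scal lam Hlam mu Hpm). Qed.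

Lemma mu_RR : mu RR = 0.
Proof.
  pose proof (lin_A mu mu_lin) as E. destruct Hmax as [_ HA].
  rewrite (mu_one lam Hlam mu Hpm) in E. rewrite (Hinv F F_cont) in E. fold m in HA. lra.
Qed.

Lemma mu_iter f n : continuous_S lam f -> mu (fun w => f (iterT n w)) = mu f.
Proof.
  revert f; induction n; intros f Hf; simpl. reflexivity.
  rewrite (Hinv (fun w => f (iterT n w))). auto. apply (cont_iterT lam Hlam); auto.
Qed.

Lemma mu_cost N : mu (fun w => cost RR w N) = 0.
Proof.
  induction N. simpl. apply (mu_const lam Hlam mu Hpm).
  assert (E : (fun w => cost RR w (S N)) = (fun w => cost RR w N + RR (iterT N w))).
  { apply functional_extensionality; intro w. apply cost_S_r. }
  rewrite E, (mu_add lam Hlam mu Hpm), IHN, mu_iter, mu_RR. ring.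
  apply RR_cont. apply cost_cont. apply (cont_iterT lam Hlam). apply RR_cont.
Qed.

Lemma supp_cyl y N : in_supp lam mu y -> 0 < mu (cyl y (S N)).
Proof.
  intros H. rewrite <- (ball_cyl lam Hlam). apply H. apply pow_lt; lra.
Qed.

Lemma transit y y' : in_supp lam mu y -> in_supp lam mu y' ->
  forall M dl, 0 < dl -> reach lam A F y y' M dl.
Proof.
  intros Hy Hy' M dl Hdl.
  set (Lc := S M).
  pose proof Hpm as Hpm. pose proof Hinv as Hinv.
  destruct (cN_cv lam Hlam mu Hpm y' Lc) as [c Hc].
  assert (Hc1 : cN mu y' Lc 1 <= c) by (apply (growing_ineq _ c (cN_growing lam Hlam mu Hpm y' Lc) Hc)).
  assert (Ecn1 : cN mu y' Lc 1 = mu (cyl y' Lc)).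
  { unfold cN. rewrite <- (Hinv (cyl y' Lc)).
    apply (mu_ext lam Hlam mu Hpm). intros w. unfold eN, cyl, Wset.
    destruct (excluded_middle_informative (exists n, (1 <= n <= 1)%nat /\ agree (iterT n w) y' Lc)) as [H1|H1];
    destruct (excluded_middle_informative (agree (shift w) y' Lc)) as [H2|H2]; auto; exfalso.
    - apply H2. destruct H1 as [n [Hn Ha]]. replace n with 1%nat in Ha by lia. exact Ha.
    - apply H1. exists 1%nat. split. lia. exact H2.
    - apply (cont_dep lam Hlam _ _ (cyl_dep y' Lc)). }
  assert (Hcpos : 0 < c) by (pose proof (supp_cyl y' M Hy'); fold Lc in H; lra).
  set (mu1' := mu1 mu y' Lc).
  assert (L1 : Lin lam mu1').
  { split. apply (mu1_add lam Hlam mu Hpm). apply (mu1_scal lam Hlam mu Hpm). }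
  assert (One : mu1' (fun _ => 1) = c).
  { unfold mu1', mu1. apply Lim_spec.
    assert (E : aS mu y' Lc (fun _ => 1) = cN mu y' Lc).
    { apply functional_extensionality; intro N. unfold aS, cN. apply (mu_ext lam Hlam mu Hpm). intros; ring. }
    rewrite E. auto. }
  assert (Hinv1 : forall f, continuous_S lam f -> mu1' (fun x => f (shift x)) = mu1' f).
  { intros f Hf. apply (mu1_inv lam Hlam mu Hpm Hinv); auto. }
  assert (R1 : mu1' RR = 0).
  { pose proof (mu1_pos lam Hlam mu Hpm y' Lc RR RR_cont (RR_nonneg lam alpha A F HF)).
    pose proof (mu1_le_mu lam Hlam mu Hpm y' Lc RR RR_cont (RR_nonneg lam alpha A F HF)).
    rewrite mu_RR in H0. unfold mu1'. lra. }
  set (nu := fun f => mu1' f / c).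
  assert (Hnu : maximizing lam A nu).
  { split. split. split; [|split; [|split]].
    - intros f g Hf Hg. unfold nu. rewrite (proj1 L1); auto. field. lra.
    - intros c0 f Hf. unfold nu. rewrite (proj2 L1); auto. field. lra.
    - intros f Hf Hp. unfold nu, Rdiv. apply Rmult_le_pos. 2: (apply Rlt_le, Rinv_0_lt_compat; lra).
      apply (mu1_pos lam Hlam mu Hpm); auto.
    - unfold nu. rewrite One. field. lra.
    - intros f Hf. unfold nu. rewrite Hinv1; auto.
    - unfold nu. rewrite (lin_A mu1' L1), Hinv1, R1, One. fold m. field. lra. apply F_cont. }
  specialize (Huniq nu Hnu).
  assert (Hpos1 : 0 < mu1' (cyl y Lc)).
  { assert (Cy : continuous_S lam (cyl y Lc)) by (apply (cont_dep lam Hlam _ _ (cyl_dep y Lc))).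
    specialize (Huniq (cyl y Lc) Cy). unfold nu in Huniq.
    pose proof (supp_cyl y M Hy) as Hsy. fold Lc in Hsy.
    assert (Eq1 : mu1' (cyl y Lc) = c * mu (cyl y Lc)) by (rewrite <- Huniq; field; lra).
    rewrite Eq1. apply Rmult_lt_0_compat; auto. }
  assert (HN : exists N, 0 < aS mu y' Lc (cyl y Lc) N).
  { apply NNPP; intro Hn.
    assert (X : mu1' (cyl y Lc) <= 0).
    { apply (@Rle_cv_lim (aS mu y' Lc (cyl y Lc)) (fun _ => 0)).
      intros N. apply Rnot_lt_le. intro. apply Hn. eauto.
      apply (mu1_cv lam Hlam mu Hpm). apply (cont_dep lam Hlam _ _ (cyl_dep y Lc)).
      apply Un_cv_const. }
    lra. }
  destruct HN as [N HN].
  set (e := fun w => cyl y Lc w * eN y' Lc N w).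
  assert (De : dep e (N + Lc)).
  { apply dep_mult. apply dep_mono with Lc. lia. apply cyl_dep. apply eN_dep. }
  assert (He01 : forall w, e w = 0 \/ e w = 1).
  { intros w. unfold e. destruct (eN_01 y' Lc N w) as [E|E]; rewrite E; unfold cyl;
    destruct excluded_middle_informative; [left|left|right|left]; ring. }
  assert (Ce : continuous_S lam e) by (apply (cont_dep lam Hlam _ _ De)).
  assert (Hh0 : forall w, 0 <= cost RR w N) by (intros w; apply cost_nonneg; apply (RR_nonneg lam alpha A F HF)).
  destruct (mu_extract lam Hlam mu Hpm e (fun w => cost RR w N) dl Ce (cost_cont N) He01 Hh0 (mu_cost N) HN Hdl)
    as [u [Hu1 Hu2]].
  { unfold e, cyl, eN in Hu1.
    destruct (excluded_middle_informative (agree u y Lc)) as [Ha|Ha];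
    destruct (excluded_middle_informative (Wset y' Lc N u)) as [Hw|Hw]; try lra.
    destruct Hw as [n [Hn Hag]].
    exists u, n. repeat split.
    + lia.
    + apply agree_mono with Lc; auto. unfold Lc; lia.
    + apply agree_mono with Lc; auto. unfold Lc; lia.
    + pose proof (cost_mono RR (RR_nonneg lam alpha A F HF) u n N ltac:(lia)). fold RR. lra. }
Qed.

End Trans.


Section Final.
Context {d : nat} (lam alpha : R) (Hlam : 0 < lam < 1) (Halpha : 0 < alpha)
  (A F : Sigma d -> R) (HAh : hoelder lam alpha A) (HF : calibrated lam alpha A F)
  (KR : R) (HKR0 : 0 <= KR)
  (HKR : forall a b n, agree a b n -> Rabs (R_F lam A F a - R_F lam A F b) <= KR * qq lam alpha ^ n).

Let m := mA lam A.
Let RR := R_F lam A F.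
Let q := qq lam alpha.
Let Hq : 0 < q < 1 := qq_in lam alpha Hlam Halpha.

Definition ereach (a b : Sigma d) : Prop :=
  exists L, (1 <= L)%nat /\ iterT L a = b /\ cost RR a L = 0.

Lemma cost_zero p L : (forall i, (i < L)%nat -> RR (iterT i p) = 0) -> cost RR p L = 0.
Proof.
  induction L; intros H. reflexivity.
  rewrite cost_S_r, IHL, H. ring. lia. intros i Hi; apply H; lia.
Qed.

Lemma ereach_reach a b y y' M : ereach a b -> agree a y M -> agree b y' M -> reach lam A F y y' M 0.
Proof.
  intros [L [HL [He Hc]]] Ha Hb. exists a, L. repeat split; auto. rewrite He; auto. fold RR; lra.
Qed.

Lemma cluster_aubry (s : nat -> Sigma d) y :
  (forall k1 k2, (k1 < k2)%nat -> ereach (s k1) (s k2) \/ ereach (s k2) (s k1)) ->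
  (forall n, IO s y n) -> aubry lam A y.
Proof.
  intros Hs Hy. apply (aubry_crit lam alpha Hlam Halpha A F HF KR HKR0 HKR).
  intros M dl Hdl. destruct (Hy M 0%nat) as [k1 [_ H1]]. destruct (Hy M (S k1)) as [k2 [Hk2 H2]].
  apply reach_mono with M 0. lia. lra.
  destruct (Hs k1 k2 ltac:(lia)) as [E|E].
  - eapply ereach_reach; eauto.
  - eapply ereach_reach; eauto.
Qed.

Definition Eb (M : nat) : R := KR * q ^ M / (1 - q).

Lemma Eb_small e : 0 < e -> exists M0, forall M, (M >= M0)%nat -> Eb M < e.
Proof.
  intros He. destruct (Kpow_small q (KR / (1 - q)) e Hq) as [M2 HM2]; auto.
  unfold Rdiv; apply Rmult_le_pos; auto. apply Rlt_le, Rinv_0_lt_compat; lra.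
  exists M2. intros n Hn. specialize (HM2 n Hn). unfold Eb, Rdiv in *.
  replace (KR * q ^ n * / (1 - q)) with (KR * / (1 - q) * q ^ n) by ring. auto.
Qed.

Lemma loop_aubry x a b :
  (forall M, reach lam A F x a M 0) ->
  (forall M dl, 0 < dl -> reach lam A F a b M dl) ->
  (forall M, reach lam A F b x M 0) -> aubry lam A x.
Proof.
  intros H1 H2 H3. apply (aubry_crit lam alpha Hlam Halpha A F HF KR HKR0 HKR).
  intros M dl Hdl. destruct (Eb_small (dl / 4)) as [M0 HM0]. lra.
  set (M' := Nat.max M M0).
  pose proof (reach_trans lam alpha Hlam Halpha A F KR HKR0 HKR _ _ _ M' _ _ (H1 M') (H2 M' (dl / 4) ltac:(lra))) as T1.
  pose proof (reach_trans lam alpha Hlam Halpha A F KR HKR0 HKR _ _ _ M' _ _ T1 (H3 M')) as T2.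
  apply reach_mono with M' (0 + dl / 4 + KR * qq lam alpha ^ M' / (1 - qq lam alpha) + 0 +
                           KR * qq lam alpha ^ M' / (1 - qq lam alpha)); auto.
  unfold M'; lia. specialize (HM0 M' ltac:(unfold M'; lia)). unfold Eb in HM0. fold q. lra.
Qed.

End Final.


Theorem mainTheorem17 (d : nat) (lam alpha : R) (Hlam : 0 < lam < 1) (Halpha : 0 < alpha)
  (A F : Sigma d -> R) (HA : in_R lam alpha A) (HF : calibrated lam alpha A F) :
  (forall x : Sigma d, ~ aubry lam A x -> I_F_pos lam A F x) /\
  (forall x : Sigma d, ~ aubry lam A x -> aubry lam A (shift x) -> 0 < R_F lam A F x).
Proof.
  destruct (R_hold lam alpha Hlam Halpha A F (proj1 HA) HF) as [KR [HKR0 HKR]].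
  destruct HA as [HAh [mu [Hmax [Huniq Hiff]]]].
  pose proof (RR_nonneg lam alpha A F HF) as Rnn.
  assert (Hpre : forall w, exists v, shift v = w /\ R_F lam A F v = 0).
  { intros w. destruct HF as [_ Hc]. destruct (Hc w) as [_ [v [Hv1 Hv2]]].
    exists v. split; auto. unfold R_F. rewrite Hv1. lra. }
  set (pre := fun w => proj1_sig (constructive_indefinite_description _ (Hpre w))).
  assert (Hpre1 : forall w, shift (pre w) = w /\ R_F lam A F (pre w) = 0).
  { intros w. unfold pre. destruct (constructive_indefinite_description _ (Hpre w)); auto. }
  assert (Back : forall x, exists y', aubry lam A y' /\ forall M, reach lam A F y' x M 0).
  { intros x.
    set (P := fix P (n : nat) : Sigma d := match n with O => x | S n => pre (P n) end).
    assert (HP1 : forall j i, iterT j (P (i + j)%nat) = P i).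
    { induction j; intros i. simpl. f_equal; lia.
      simpl. replace (i + S j)%nat with (S (i + j)) by lia. simpl.
      rewrite (proj1 (Hpre1 _)). apply IHj. }
    assert (HP2 : forall n, R_F lam A F (P (S n)) = 0) by (intros n; simpl; apply Hpre1).
    assert (HE : forall k1 k2, (k1 < k2)%nat -> ereach lam A F (P k2) (P k1)).
    { intros k1 k2 H. exists (k2 - k1)%nat. split. lia. split.
      - pose proof (HP1 (k2 - k1)%nat k1). replace (k1 + (k2 - k1))%nat with k2 in H0 by lia. auto.
      - apply (cost_zero lam A F). intros i Hi.
        pose proof (HP1 i (k2 - i)%nat). replace (k2 - i + i)%nat with k2 in H0 by lia.
        rewrite H0. replace (k2 - i)%nat with (S (k2 - i - 1)) by lia. apply HP2. }
    destruct (cluster P) as [y' Hy'].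
    exists y'. split.
    - apply (cluster_aubry lam alpha Hlam Halpha A F HF KR HKR0 HKR P y'); auto.
    - intros M. destruct (Hy' M 1%nat) as [k [Hk Hag]].
      exact (ereach_reach lam A F (P k) (P 0%nat) y' x M (HE 0%nat k ltac:(lia)) Hag (agree_refl _ _)). }
  split.
  - intros x Hx. apply NNPP; intro Hn.
    assert (Z : forall i, R_F lam A F (iterT i x) = 0).
    { intros i. apply Rle_antisym; [|apply Rnn].
      assert (S0 : sum_f_R0 (fun i => R_F lam A F (iterT i x)) i <= 0).
      { apply Rnot_lt_le. intro. apply Hn. exists i; auto. }
      destruct i as [|i]. simpl in S0; auto.
      simpl in S0. pose proof (cond_pos_sum (fun i => R_F lam A F (iterT i x)) i (fun n => Rnn _)).
      simpl in H. change (iterT (S i) x) with (iterT i (shift x)). lra. }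
    set (s := fun k => iterT k x).
    assert (HE : forall k1 k2, (k1 < k2)%nat -> ereach lam A F (s k1) (s k2)).
    { intros k1 k2 H. exists (k2 - k1)%nat. split. lia. unfold s. split.
      - rewrite iterT_add. f_equal; lia.
      - apply (cost_zero lam A F). intros i Hi. rewrite iterT_add. apply Z. }
    destruct (cluster s) as [y Hy].
    assert (Ay : aubry lam A y).
    { apply (cluster_aubry lam alpha Hlam Halpha A F HF KR HKR0 HKR s y); auto. }
    destruct (Back x) as [y' [Ay' Hb]].
    apply Hx. apply (loop_aubry lam alpha Hlam Halpha A F HF KR HKR0 HKR x y y').
    + intros M. destruct (Hy M 1%nat) as [k [Hk Hag]].
      exact (ereach_reach lam A F (s 0%nat) (s k) x y M (HE 0%nat k ltac:(lia)) (agree_refl _ _) Hag).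
    + intros M dl Hdl. apply (transit lam alpha Hlam Halpha A F HAh HF mu Hmax Huniq); auto.
      apply Hiff; auto. apply Hiff; auto.
    + auto.
  - intros x Hx Hsx. apply Rnot_le_lt; intro Hle.
    assert (Z : R_F lam A F x = 0) by (pose proof (Rnn x); lra).
    destruct (Back x) as [y' [Ay' Hb]].
    apply Hx. apply (loop_aubry lam alpha Hlam Halpha A F HF KR HKR0 HKR x (shift x) y').
    + intros M. apply (ereach_reach lam A F x (shift x) x (shift x) M).
      exists 1%nat. split. lia. split. reflexivity. simpl. rewrite Z. ring.
      apply agree_refl. apply agree_refl.
    + intros M dl Hdl. apply (transit lam alpha Hlam Halpha A F HAh HF mu Hmax Huniq); auto.
      apply Hiff; auto. apply Hiff; auto.
    + auto.
Qed.
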